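(* Let $n\ge2$, $\lambda>0$, and let $\mathbf{r}\in\mathbb{R}^n$ have pairwise distinct coordinates, with $r_{(n)}=\max_ir_i$, $r_{(1)}=\min_ir_i$ attained at indices $i^\star$ and $j^\star$ respectively. Then $$\sup_{(\boldsymbol{\pi},\mathbf{q})\in\Delta_n\times\Delta_n}\Big\{\langle\mathbf{q}-\boldsymbol{\pi},\mathbf{r}\rangle-\lambda H(\mathbf{q}\|\boldsymbol{\pi})\Big\}=\lambda\log\Big(\frac{e^{r_{(n)}/\lambda}-e^{r_{(1)}/\lambda}}{r_{(n)}-r_{(1)}}\Big)-\frac{e^{r_{(n)}/\lambda}r_{(1)}-e^{r_{(1)}/\lambda}r_{(n)}}{e^{r_{(n)}/\lambda}-e^{r_{(1)}/\lambda}}+\lambda\log\lambda-\lambda,$$ and the supremum is attained at $(\boldsymbol{\pi}^\star,\mathbf{q}^\star)$ where $$\pi^\star_{i^\star}=\frac{e^{r_{i^\star}/\lambda}-e^{r_{j^\star}/\lambda}-\lambda^{-1}(r_{i^\star}-r_{j^\star})e^{r_{j^\star}/\lambda}}{\lambda^{-1}(r_{i^\star}-r_{j^\star})(e^{r_{i^\star}/\lambda}-e^{r_{j^\star}/\lambda})},\quad\pi^\star_{j^\star}=1-\pi^\star_{i^\star},\quad\pi^\star_k=0\ (k\notin\{i^\star,j^\star\}),$$ and $q^\star_i=\pi^\star_ie^{r_i/\lambda}/\sum_j\pi^\star_je^{r_j/\lambda}$ for $i=1,\dots,n$.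
   Context: $\Delta_n=\{\mathbf{x}\in[0,1]^n:\sum_ix_i=1\}$; $\supp(\mathbf{x})=\{i:x_i>0\}$. Relative entropy: $H(\mathbf{q}\|\boldsymbol{\pi})=\sum_{i\in\supp(\mathbf{q})}q_i\log(q_i/\pi_i)$ if $\supp(\mathbf{q})\subseteq\supp(\boldsymbol{\pi})$ and $+\infty$ otherwise. *)

(* Defs.v *)
From HB Require Import structures.
From mathcomp Require Import all_boot all_order all_algebra.
From mathcomp Require Import all_classical all_reals all_analysis.
Set Implicit Arguments. Unset Strict Implicit. Unset Printing Implicit Defensive.
Import Order.TTheory GRing.Theory Num.Theory.
Local Open Scope ring_scope.
Local Open Scope classical_set_scope.

Definition simplex (R : realType) (n : nat) : set ('I_n -> R) :=
  [set x | (forall i, 0 <= x i <= 1) /\ \sum_(i < n) x i = 1].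

Definition relH (R : realType) (n : nat) (q pi : 'I_n -> R) : \bar R :=
  if [forall i, (0 < q i) ==> (0 < pi i)]
  then ((\sum_(i < n | 0 < q i) q i * ln (q i / pi i))%:E)%E
  else (+oo)%E.

Definition objective (R : realType) (n : nat) (lam : R) (r pi q : 'I_n -> R)
  : \bar R :=
  ((\sum_(i < n) (q i - pi i) * r i)%:E - lam%:E * relH q pi)%E.

Definition optimal_value (R : realType) (n : nat) (lam : R) (r : 'I_n -> R)
  (istar jstar : 'I_n) : R :=
  let a := r istar in let b := r jstar in
  let A := expR (a / lam) in let B := expR (b / lam) in
  lam * ln ((A - B) / (a - b)) - (A * b - B * a) / (A - B)
  + lam * ln lam - lam.

Definition pi_star (R : realType) (n : nat) (lam : R) (r : 'I_n -> R)
  (istar jstar : 'I_n) : 'I_n -> R :=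
  let a := r istar in let b := r jstar in
  let A := expR (a / lam) in let B := expR (b / lam) in
  let p := (A - B - lam^-1 * (a - b) * B) / (lam^-1 * (a - b) * (A - B)) in
  fun k => if k == istar then p else if k == jstar then 1 - p else 0.

Definition q_star (R : realType) (n : nat) (lam : R) (r : 'I_n -> R)
  (istar jstar : 'I_n) : 'I_n -> R :=
  let p := pi_star lam r istar jstar in
  fun i => p i * expR (r i / lam) / \sum_(j < n) p j * expR (r j / lam).

(* Main.v *)
Require Import Defs.
From HB Require Import structures.
From mathcomp Require Import all_boot all_order all_algebra.
From mathcomp Require Import all_classical all_reals all_analysis.
From mathcomp Require Import ring lra.
Import Order.TTheory GRing.Theory Num.Theory.
Local Open Scope ring_scope.
Local Open Scope classical_set_scope.
Set Implicit Arguments. Unset Strict Implicit.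
Lemma ln_le_lin (R : realType) (x c : R) : 0 < x -> 0 < c ->
  ln x <= x / c - 1 + ln c.
Proof.
move=> x0 c0.
have xc : 0 < x / c by rewrite divr_gt0.
have -> : ln x = ln (x / c) + ln c.
  by rewrite -lnM ?posrE // mulfVK // gt_eqF.
have := expR_ge1Dx (ln (x / c)); rewrite lnK ?posrE //; lra.
Qed.

Lemma chord (R : realType) (lam a b x : R) : 0 < lam -> b < a -> b <= x <= a ->
  (a - b) * expR (x / lam) <= (x - b) * expR (a / lam) + (a - x) * expR (b / lam).
Proof.
move=> l0 ba /andP[bx xa].
set E := expR (x / lam).
have hA : E * (1 + (a - x) / lam) <= expR (a / lam).
  have := expR_ge1Dx ((a - x) / lam).
  have -> : a / lam = x / lam + (a - x) / lam by rewrite -mulrDl; congr (_ / _); ring.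
  rewrite expRD => h; rewrite ler_pM2l // expR_gt0.
  done.
have hB : E * (1 + (b - x) / lam) <= expR (b / lam).
  have := expR_ge1Dx ((b - x) / lam).
  have -> : b / lam = x / lam + (b - x) / lam by rewrite -mulrDl; congr (_ / _); ring.
  rewrite expRD => h; rewrite ler_pM2l // expR_gt0.
  done.
have E0 : 0 < E by exact: expR_gt0.
have h1 := ler_wpM2l (ltac:(rewrite subr_ge0 //) : 0 <= x - b) hA.
have h2 := ler_wpM2l (ltac:(rewrite subr_ge0 //) : 0 <= a - x) hB.
have -> : (a - b) * E = (x - b) * (E * (1 + (a - x) / lam)) + (a - x) * (E * (1 + (b - x) / lam)).
  field; lra.
exact: lerD.
Qed.

Lemma upper (R : realType) (n : nat) (lam : R) (r pi q : 'I_n -> R) (a b : R) :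
 0 < lam -> b < a -> (forall k, b <= r k <= a) -> simplex pi -> simplex q ->
 (forall i, 0 < q i -> 0 < pi i) ->
 \sum_(i < n) (q i - pi i) * r i
   - lam * \sum_(i < n | 0 < q i) q i * ln (q i / pi i)
 <= lam * ln ((expR (a/lam) - expR (b/lam)) / (a - b))
    - (expR (a/lam) * b - expR (b/lam) * a) / (expR (a/lam) - expR (b/lam))
    + lam * ln lam - lam.
Proof.
move=> l0 ba hr [hpi spi] [hq sq] supp.
set A := expR (a/lam); set B := expR (b/lam).
have AB0 : 0 < A - B by rewrite subr_gt0 ltr_expR ltr_pM2r ?invr_gt0.
have ab0 : 0 < a - b by rewrite subr_gt0.
have frac0 : 0 < (A - B) / (a - b) by rewrite divr_gt0.
set S0 := lam * ((A - B) / (a - b)).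
have S00 : 0 < S0 by rewrite mulr_gt0.
set G := (a * B - b * A) / (A - B).
have key : forall i, q i * r i - lam * (if 0 < q i then q i * ln (q i / pi i) else 0)
    - pi i * r i <= pi i * G - lam * q i + lam * q i * ln S0.
  move=> i.
  set e := expR (r i / lam).
  have e0 : 0 < e by exact: expR_gt0.
  have ch : lam * e / S0 - r i <= G.
    have h := chord l0 ba (hr i).
    suff : 0 <= G - (lam * e / S0 - r i) by lra.
    have -> : G - (lam * e / S0 - r i)
       = ((r i - b) * A + (a - r i) * B - (a - b) * e) / (A - B).
      rewrite /G /S0; field.
      by rewrite !gt_eqF.
    by apply: divr_ge0; [rewrite subr_ge0; exact: h | exact: ltW].
  have pi0 := (hpi i); move/andP: pi0 => [pi0 _].
  have pch := ler_wpM2l pi0 ch.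
  have pe0 : 0 <= pi i * (lam * e / S0) by rewrite mulr_ge0 // ltW // divr_gt0 // mulr_gt0.
  case: ifP => qi.
  - have pip := supp i qi.
    set y := pi i * e / q i.
    have y0 : 0 < y by rewrite divr_gt0 // mulr_gt0.
    have lnq : ln (q i / pi i) = ln (q i) - ln (pi i) by rewrite ln_div ?posrE.
    have lny : ln y = ln (pi i) + r i / lam - ln (q i).
      by rewrite /y ln_div ?posrE ?mulr_gt0 // lnM ?posrE // /e expRK.
    have hl := ln_le_lin y0 S00.
    have lq0 : 0 <= lam * q i by rewrite mulr_ge0 // ltW.
    have := ler_wpM2l lq0 hl.
    have E1 : lam * q i * ln y = lam * q i * ln (pi i) + q i * r i - lam * q i * ln (q i).
      rewrite lny; field; rewrite ?gt_eqF // ?mulf_neq0 // ?gt_eqF.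
    have E2 : lam * q i * (y / S0 - 1 + ln S0)
        = pi i * (lam * e / S0) - lam * q i + lam * q i * ln S0.
      rewrite /y; field; by rewrite !gt_eqF.
    rewrite E1 E2 lnq => h.
    lra.
  - have q0 : q i = 0.
      move/andP: (hq i) => [q0 _]; apply/eqP; rewrite eq_le q0 andbT.
      by rewrite leNgt qi.
    rewrite q0; lra.
have : \sum_(i < n) (q i * r i - lam * (if 0 < q i then q i * ln (q i / pi i) else 0)
    - pi i * r i) <= \sum_(i < n) (pi i * G - lam * q i + lam * q i * ln S0).
  by apply: ler_sum => i _; exact: key.
have -> : \sum_(i < n) (q i * r i - lam * (if 0 < q i then q i * ln (q i / pi i) else 0)
    - pi i * r i) = \sum_(i < n) (q i - pi i) * r i
   - lam * \sum_(i < n | 0 < q i) q i * ln (q i / pi i).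
  rewrite [X in _ = _ - X]mulr_sumr [X in _ = _ - X]big_mkcond -sumrB; apply: eq_bigr => i _ /=; case: ifP => _; ring.
rewrite big_split /= sumrB -!mulr_suml -!mulr_sumr spi sq.
have -> : ln S0 = ln lam + ln ((A - B) / (a - b)) by rewrite /S0 lnM ?posrE.
have -> : G = - ((A * b - B * a) / (A - B)) by rewrite /G -[RHS]mulNr; congr (_ * _); ring.
lra.
Qed.

Lemma sum_two (R : realType) n (i j : 'I_n) (x y : R) (f : 'I_n -> R) : i != j ->
  \sum_(k < n) (if k == i then x else if k == j then y else 0) * f k
  = x * f i + y * f j.
Proof.
move=> ij.
rewrite (bigD1 i) //= eqxx (bigD1 j) /=; last by rewrite eq_sym.
rewrite eq_sym (negbTE ij) eqxx big1 ?addr0 ?addrA // => k /andP[ki kj].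
by rewrite (negbTE ki) (negbTE kj) mul0r.
Qed.

Lemma simplex_of (R : realType) n (x : 'I_n -> R) :
  (forall i, 0 <= x i) -> \sum_(i < n) x i = 1 -> simplex x.
Proof.
move=> h s; split => // i; rewrite h /= -s (bigD1 i) //= lerDl.
by apply: sumr_ge0 => k _.
Qed.

Lemma pbounds (R : realType) (lam a b A0 B0 : R) : 0 < lam -> b < a ->
  A0 = expR (a / lam) -> B0 = expR (b / lam) ->
  0 <= (A0 - B0 - lam^-1 * (a - b) * B0) / (lam^-1 * (a - b) * (A0 - B0)) <= 1.
Proof.
move=> l0 ba -> ->.
set A := expR (a / lam); set B := expR (b / lam).
set t := lam^-1 * (a - b).
have t0 : 0 < t by rewrite mulr_gt0 ?invr_gt0 ?subr_gt0.
set E := expR t.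
have Bp : 0 < B by exact: expR_gt0.
have AE : A = B * E by rewrite /A /B /E -expRD; congr expR; rewrite /t; field; rewrite gt_eqF.
have E1 : 1 + t <= E := expR_ge1Dx t.
have E2 : E * (1 - t) <= 1.
  have := ler_wpM2l (expR_ge0 t) (expR_ge1Dx (- t)).
  by rewrite expRxMexpNx_1 -/E.
have EB : 0 < A - B by rewrite AE -{2}(mulr1 B) -mulrBr mulr_gt0 // subr_gt0; lra.
have den : 0 < t * (A - B) by rewrite mulr_gt0.
apply/andP; split.
  apply: divr_ge0; last exact: ltW.
  rewrite AE.
  have : 0 <= B * (E - 1 - t) by apply: mulr_ge0; lra.
  lra.
rewrite -/t ler_pdivrMr // mul1r AE.
have : 0 <= B * (1 - E * (1 - t)) by apply: mulr_ge0; lra.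
lra.
Qed.

Unset Implicit Arguments.

Theorem mainTheorem17 (R : realType) (n : nat) (lam : R) (r : 'I_n -> R)
  (istar jstar : 'I_n) :
  (2 <= n)%N -> 0 < lam -> injective r ->
  (forall k, r k <= r istar) -> (forall k, r jstar <= r k) ->
  ereal_sup [set z | exists pi q, @simplex R n pi /\ @simplex R n q /\
                                  z = objective lam r pi q]
    = (optimal_value lam r istar jstar)%:E
  /\ @simplex R n (pi_star lam r istar jstar)
  /\ @simplex R n (q_star lam r istar jstar)
  /\ objective lam r (pi_star lam r istar jstar) (q_star lam r istar jstar)
     = (optimal_value lam r istar jstar)%:E.
Proof.
move=> n2 l0 rinj hmax hmin.
have ij : istar != jstar.
  apply/negP => /eqP eij.
  have h0 : (0 < n)%N by apply: leq_trans n2.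
  have h1 : (1 < n)%N by [].
  have e : forall k, k = istar by move=> k; apply: rinj; apply/eqP; rewrite eq_le hmax eij hmin.
  have e01 := etrans (e (Ordinal h0)) (esym (e (Ordinal h1))).
  by move: e01 => /(congr1 val).
set a := r istar; set b := r jstar.
have ba : b < a.
  rewrite lt_neqAle hmax andbT; apply/eqP => eab.
  by move: ij; rewrite (rinj _ _ eab) eqxx.
have hr : forall k, b <= r k <= a by move=> k; rewrite hmin hmax.
set A := expR (a / lam); set B := expR (b / lam).
have AB0 : 0 < A - B by rewrite subr_gt0 ltr_expR ltr_pM2r ?invr_gt0.
have ab0 : 0 < a - b by rewrite subr_gt0.
have Bp : 0 < B by exact: expR_gt0.
set p := (A - B - lam^-1 * (a - b) * B) / (lam^-1 * (a - b) * (A - B)).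
have /andP[p0 p1] : 0 <= p <= 1 by exact: pbounds.
have piE : pi_star lam r istar jstar
    = fun k => if k == istar then p else if k == jstar then 1 - p else 0 by [].
have sumpi : forall f : 'I_n -> R, \sum_(k < n) pi_star lam r istar jstar k * f k
    = p * f istar + (1 - p) * f jstar by move=> f; rewrite piE sum_two.
have pinn : forall k, 0 <= pi_star lam r istar jstar k.
  move=> k; rewrite piE /=; case: ifP => _ //; case: ifP => _ //; lra.
have spi : simplex (pi_star lam r istar jstar).
  apply: simplex_of => //.
  have := sumpi (fun=> 1); rewrite (eq_bigr (fun k => pi_star lam r istar jstar k)).
    by move=> ->; lra.
  by move=> k _; rewrite mulr1.
set S := \sum_(j < n) pi_star lam r istar jstar j * expR (r j / lam).
have SE : S = lam * ((A - B) / (a - b)).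
  rewrite /S sumpi -/a -/b -/A -/B /p; field.
  by rewrite !gt_eqF // ?mulr_gt0 ?invr_gt0.
have S0 : 0 < S by rewrite SE mulr_gt0 // divr_gt0.
have qE : q_star lam r istar jstar
    = fun i => pi_star lam r istar jstar i * expR (r i / lam) / S by [].
have sq : simplex (q_star lam r istar jstar).
  apply: simplex_of.
    move=> i; rewrite qE /=; apply: divr_ge0; [apply: mulr_ge0; [exact: pinn | exact: expR_ge0] | exact: ltW].
  by rewrite qE -mulr_suml -/S divff // gt_eqF.
have supp : forall i, 0 < q_star lam r istar jstar i -> 0 < pi_star lam r istar jstar i.
  move=> i; rewrite qE lt0r => /andP[qn _]; rewrite lt0r pinn andbT.
  by apply: contra qn => /eqP ->; rewrite !mul0r.
have obj : objective lam r (pi_star lam r istar jstar) (q_star lam r istar jstar)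
     = (optimal_value lam r istar jstar)%:E.
  rewrite /objective /relH ifT; last by apply/forallP => i; apply/implyP; exact: supp.
  rewrite -EFinM -EFinB; congr EFin.
  set pi := pi_star lam r istar jstar; set q := q_star lam r istar jstar.
  have -> : \sum_(i < n | 0 < q i) q i * ln (q i / pi i)
        = \sum_(i < n) q i * (r i / lam - ln S).
    rewrite big_mkcond /=; apply: eq_bigr => i _; case: ifP => qi.
      have pip := supp i qi.
      have -> : q i / pi i = expR (r i / lam) / S.
        rewrite /q qE /= -/pi; field; by rewrite !gt_eqF.
      by rewrite ln_div ?posrE ?expR_gt0 // expRK.
    have -> : q i = 0.
      move: sq => [hq _]; move/andP: (hq i) => [q0 _]; apply/eqP; rewrite eq_le q0 andbT.
      by rewrite leNgt qi.
    by rewrite mul0r.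
  have -> : \sum_(i < n) q i * (r i / lam - ln S)
      = (\sum_(i < n) q i * r i) / lam - (\sum_(i < n) q i) * ln S.
    rewrite !mulr_suml -sumrB; apply: eq_bigr => i _; ring.
  move: (sq) => [_ ->].
  have -> : \sum_(i < n) (q i - pi i) * r i = \sum_(i < n) q i * r i - \sum_(i < n) pi i * r i.
    by rewrite -sumrB; apply: eq_bigr => i _; ring.
  rewrite /pi sumpi -/a -/b SE lnM ?posrE ?divr_gt0 //.
  rewrite /optimal_value -/a -/b -/A -/B /p.
  field; by rewrite !gt_eqF // ?mulr_gt0 ?invr_gt0.
split; last by [].
apply/eqP; rewrite eq_le; apply/andP; split.
  apply: ge_ereal_sup => z [pi [q [hp [hq ->]]]].
  rewrite /objective /relH; case: ifP => h.
    rewrite -EFinM -EFinB lee_fin /optimal_value -/a -/b -/A -/B.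
    apply: upper => // i qi.
    by move/forallP: h => /(_ i) /implyP; apply.
  by rewrite gt0_muley ?lte_fin //= addeNy leNye.
apply: ereal_sup_ubound; exists (pi_star lam r istar jstar), (q_star lam r istar jstar).
by split.
Qed.
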